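(* Let $P$ be a finite poset. The space of functions $\mathcal{J}(P)\to\mathbb{R}$ that are $0$-mesic under rowmotion is equal to $\operatorname{span}_{\mathbb{R}}\{T_A\colon A\in\mathcal{A}(P)\}$.
   Context: $\mathcal{J}(P)$ is the set of order ideals of $P$ and $\mathcal{A}(P)$ the set of antichains (including the empty antichain). Rowmotion $\rho\colon\mathcal{J}(P)\to\mathcal{J}(P)$ sends $I$ to the order ideal generated by the minimal elements of $P\setminus I$. For $A\in\mathcal{A}(P)$ and $I\in\mathcal{J}(P)$: $T_A^+(I)=1$ if $A\subseteq\min(P\setminus I)$, else $0$; $T_A^-(I)=1$ if $A\subseteq\max(I)$, else $0$; $T_A=T_A^+-T_A^-$. A function is $0$-mesic under rowmotion if its average over every rowmotion orbit is $0$. *)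

(* Defs.v *)
From HB Require Import structures.
From mathcomp Require Import all_boot all_order all_algebra.
From mathcomp Require Import reals.
Set Implicit Arguments. Unset Strict Implicit. Unset Printing Implicit Defensive.
Import Order.Theory GRing.Theory Num.Theory.

Section Rowmotion.
Variables (d : Order.disp_t) (P : finPOrderType d).

Definition is_ideal (I : {set P}) : bool :=
  [forall x : P, forall y : P, ((x \in I) && (y <= x)%O) ==> (y \in I)].

Definition ideal : finType := {I : {set P} | is_ideal I}.

Definition antichain (A : {set P}) : bool :=
  [forall x in A, forall y in A, (x != y) ==> ~~ (x <= y)%O].

Definition minset (S : {set P}) : {set P} :=
  [set x in S | [forall y in S, ~~ (y < x)%O]].
Definition maxset (S : {set P}) : {set P} :=
  [set x in S | [forall y in S, ~~ (x < y)%O]].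

Definition downset (X : {set P}) : {set P} :=
  [set y | [exists x in X, (y <= x)%O]].

Lemma downset_ideal X : is_ideal (downset X).
Proof.
apply/forallP => x; apply/forallP => y; apply/implyP => /andP [].
rewrite !inE => /existsP [z /andP [zX xz]] yx.
by apply/existsP; exists z; rewrite zX (le_trans yx xz).
Qed.

Definition rowmotion (I : ideal) : ideal :=
  exist _ (downset (minset (~: val I))) (downset_ideal _).

Variable R : realType.
Local Open Scope ring_scope.

Definition TAplus (A : {set P}) (I : ideal) : R :=
  (A \subset minset (~: val I))%:R.
Definition TAminus (A : {set P}) (I : ideal) : R :=
  (A \subset maxset (val I))%:R.
Definition TA (A : {set P}) (I : ideal) : R := TAplus A I - TAminus A I.

Definition zero_mesic (f : ideal -> R) : Prop :=
  forall I : ideal,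
    (\sum_(J <- orbit rowmotion I) f J) / (size (orbit rowmotion I))%:R = 0.

End Rowmotion.

(* Main.v *)
Require Import Defs.
From HB Require Import structures.
From mathcomp Require Import all_boot all_order all_algebra.
From mathcomp Require Import reals.
Import Order.Theory GRing.Theory Num.Theory.

Module Aux.
Import Defs.
Set Implicit Arguments. Unset Strict Implicit. Unset Printing Implicit Defensive.
Section Aux.
Variables (d : Order.disp_t) (P : finPOrderType d).

Lemma exists_min (S : {set P}) x : x \in S ->
  exists2 y, y \in minset S & (y <= x)%O.
Proof.
move=> xS.
have Px : (fun y => (y \in S) && (y <= x)%O) x by rewrite /= xS lexx.
case: (@arg_minnP _ x (fun y => (y \in S) && (y <= x)%O) (fun y => #|[set z in S | (z <= y)%O]|) Px) => y /andP[yS yx] ymin.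
exists y => //; rewrite inE yS /=; apply/forall_inP => z zS; apply/negP => zy.
have := ymin z; rewrite zS (le_trans (ltW zy) yx) => /(_ isT).
apply/negP; rewrite -ltnNge; apply: proper_card; apply/properP; split.
  apply/subsetP => w; rewrite !inE => /andP[-> wz]; exact: le_trans wz (ltW zy).
exists y; first by rewrite inE yS lexx.
by rewrite inE yS /=; apply/negP => yz; have := lt_le_trans zy yz; rewrite ltxx.
Qed.

Lemma exists_max (S : {set P}) x : x \in S ->
  exists2 y, y \in maxset S & (x <= y)%O.
Proof.
move=> xS.
have Px : (fun y => (y \in S) && (x <= y)%O) x by rewrite /= xS lexx.
case: (@arg_minnP _ x (fun y => (y \in S) && (x <= y)%O) (fun y => #|[set z in S | (y <= z)%O]|) Px) => y /andP[yS yx] ymin.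
exists y => //; rewrite inE yS /=; apply/forall_inP => z zS; apply/negP => zy.
have := ymin z; rewrite zS (le_trans yx (ltW zy)) => /(_ isT).
apply/negP; rewrite -ltnNge; apply: proper_card; apply/properP; split.
  apply/subsetP => w; rewrite !inE => /andP[-> wz]; exact: le_trans (ltW zy) wz.
exists y; first by rewrite inE yS lexx.
by rewrite inE yS /=; apply/negP => yz; have := lt_le_trans zy yz; rewrite ltxx.
Qed.

Lemma minset_antichain (S : {set P}) : antichain (minset S).
Proof.
apply/forall_inP => x xS; apply/forall_inP => y; rewrite inE => /andP[_ /forall_inP yS].
apply/implyP => xy; apply/negP => lxy.
move: xS; rewrite inE => /andP[xS _].
by have := yS x xS; rewrite lt_def eq_sym xy lxy.
Qed.

Lemma maxset_antichain (S : {set P}) : antichain (maxset S).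
Proof.
apply/forall_inP => x; rewrite inE => /andP[_ /forall_inP xS]; apply/forall_inP => y yS.
apply/implyP => xy; apply/negP => lxy.
move: yS; rewrite inE => /andP[yS _].
by have := xS y yS; rewrite lt_def eq_sym xy lxy.
Qed.

Lemma antichain_sub (A B : {set P}) : A \subset B -> antichain B -> antichain A.
Proof.
move=> /subsetP AB /forall_inP H; apply/forall_inP => x xA; apply/forall_inP => y yA.
by have /forall_inP := H x (AB x xA); apply; apply: AB.
Qed.

Lemma maxset_downset (X : {set P}) : antichain X -> maxset (downset X) = X.
Proof.
move=> /forall_inP aX; apply/setP => x; rewrite inE; apply/andP/idP.
  case; rewrite inE => /existsP[z /andP[zX xz]] /forall_inP H.
  case: (eqVneq x z) => [->//|xnz].
  have : z \in downset X by rewrite inE; apply/existsP; exists z; rewrite zX lexx.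
  by move/H; rewrite lt_def eq_sym xnz xz.
move=> xX; split; first by rewrite inE; apply/existsP; exists x; rewrite xX lexx.
apply/forall_inP => y; rewrite inE => /existsP[z /andP[zX yz]]; apply/negP => xy.
have /forall_inP /(_ z zX) := aX x xX.
rewrite (le_trans (ltW xy) yz) implybF negbK => /eqP exz.
by move: xy; rewrite exz lt_def => /andP[/negP + zy]; apply; rewrite eq_le zy yz.
Qed.

Lemma downset_maxset (I : ideal P) : downset (maxset (val I)) = val I.
Proof.
apply/setP => x; rewrite inE; apply/existsP/idP.
  case=> y /andP[]; rewrite inE => /andP[yI _] xy.
  by have /forallP /(_ y) /forallP /(_ x) := valP I; rewrite yI xy /= => ->.
by move=> /exists_max [y ym xy]; exists y; rewrite ym.
Qed.

Lemma rowmotion_inj : injective (@rowmotion d P).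
Proof.
move=> I J /(congr1 val) /= e.
have em : minset (~: val I) = minset (~: val J).
  by rewrite -(maxset_downset (minset_antichain _)) e maxset_downset // minset_antichain.
suff : ~: val I = ~: val J by move/(congr1 (fun S => ~: S)); rewrite !setCK => /val_inj.
have key (I1 J1 : ideal P) : minset (~: val I1) = minset (~: val J1) ->
    {subset ~: val I1 <= ~: val J1}.
  move=> e1 x xI; have [y ym yx] := exists_min xI.
  rewrite inE; apply/negP => xJ.
  have := ym; rewrite e1 inE inE => /andP[/negP yJ _]; apply: yJ.
  by have /forallP /(_ x) /forallP /(_ y) := valP J1; rewrite xJ yx /= => ->.
by apply/setP => x; apply/idP/idP; apply: key.
Qed.

End Aux.
Local Open Scope ring_scope.
Section Alg.
Variables (d : Order.disp_t) (P : finPOrderType d) (R : realType).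

Lemma span_subsets (h : {set P} -> R) n : exists c : {set P} -> R,
  forall M : {set P}, (#|M| < n)%N -> h M = \sum_(A : {set P} | A \subset M) c A.
Proof.
elim: n => [|n [c Hc]]; first by exists (fun _ => 0).
exists (fun A => c A + (if #|A| == n then h A - \sum_(B : {set P} | B \subset A) c B else 0)).
move=> M; rewrite ltnS leq_eqVlt => /orP[/eqP eM|ltM]; rewrite big_split /=.
  set e := (X in _ = _ + X).
  have -> : e = h M - \sum_(B : {set P} | B \subset M) c B.
    rewrite /e (bigD1 M) //= eM eqxx [X in _ + X = _]big1 ?addr0 //.
    move=> A /andP[AM nAM]; case: eqP => // eA.
    have : (#|A| < #|M|)%N by apply: proper_card; rewrite properEneq nAM AM.
    by rewrite eA eM ltnn.
  by rewrite addrC subrK.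
rewrite [X in _ = _ + X]big1 ?addr0; first exact: Hc.
move=> A AM; case: eqP => // eA.
by have := subset_leq_card AM; rewrite eA leqNgt ltM.
Qed.

Lemma sum_traject (T : eqType) (f : T -> T) (F : T -> R) x n :
  \sum_(J <- traject f x n) F J = \sum_(i < n) F (iter i f x).
Proof.
elim: n x => [|n IH] x; first by rewrite big_nil big_ord0.
by rewrite trajectS big_cons IH big_ord_recl /=; congr (_ + _); apply: eq_bigr => i _; rewrite -iterSr.
Qed.

Local Notation rho := (@rowmotion d P).

Lemma coboundary_mesic (g : ideal P -> R) (f : ideal P -> R) :
  (forall I, f I = g (rho I) - g I) -> zero_mesic f.
Proof.
move=> fg I; rewrite /orbit sum_traject.
under eq_bigr => i _ do rewrite fg -iterS.
by rewrite -(big_mkord xpredT (fun i => g (iter i.+1 rho I) - g (iter i rho I))) telescope_sumr // iter_order ?subrr ?mul0r //; exact: rowmotion_inj.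
Qed.

Lemma mesic_coboundary (f : ideal P -> R) :
  zero_mesic f -> exists g : ideal P -> R, forall I, f I = g (rho I) - g I.
Proof.
move=> zf.
have inj := @rowmotion_inj d P.
pose r I := froot rho I.
have cr I : fconnect rho (r I) I by rewrite fconnect_sym //; exact: connect_root.
have rS I : r (rho I) = r I.
  rewrite /r; symmetry.
  have H := @fingraph.rootP _ (frel rho) (fconnect_sym inj) I (rho I).
  apply/H; exact: fconnect1.
exists (fun I => \sum_(j < findex rho (r I) I) f (iter j rho (r I))).
move=> I; rewrite rS.
set k := findex rho (r I) I.
have kn : (k < order rho (r I))%N by apply: findex_max.
have ik : iter k rho (r I) = I by apply: iter_findex.
have tot : \sum_(j < order rho (r I)) f (iter j rho (r I)) = 0.
  have := zf (r I); rewrite /orbit sum_traject size_traject.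
  move/eqP; rewrite mulf_eq0 invr_eq0 pnatr_eq0 eqn0Ngt order_gt0 orbF => /eqP //.
have eI : rho I = iter k.+1 rho (r I) by rewrite iterS ik.
move: kn; rewrite leq_eqVlt => /orP[/eqP ekn | lkn].
  move: tot; rewrite -ekn big_ord_recr /= ik => tot.
  rewrite eI ekn iter_order // findex0 big_ord0 sub0r.
  by apply/eqP; rewrite -addr_eq0 addrC tot.
by rewrite eI findex_iter // big_ord_recr /= ik addrAC subrr add0r.
Qed.

End Alg.
Section C.
Variables (d : Order.disp_t) (P : finPOrderType d) (R : realType).

Lemma span_TAminus (g : ideal P -> R) : exists c : {set P} -> R,
  forall I, g I = \sum_(A : {set P} | antichain A) c A * TAminus R A I.
Proof.
pose h (M : {set P}) := g (exist _ (downset M) (downset_ideal M) : ideal P).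
have [c Hc] := span_subsets h #|P|.+1.
exists c => I.
have -> : g I = h (maxset (val I)).
  by rewrite /h; congr g; apply: val_inj; rewrite /= downset_maxset.
rewrite Hc ?ltnS ?max_card // big_mkcond [RHS]big_mkcond /=.
apply: eq_bigr => A _; rewrite /TAminus.
case: (boolP (A \subset maxset (val I))) => AM.
  by rewrite (antichain_sub AM (maxset_antichain _)) mulr1.
by case: (antichain A); rewrite ?mulr0.
Qed.

Lemma TAplus_rho (A : {set P}) (I : ideal P) : TAplus R A I = TAminus R A (rowmotion I).
Proof. by rewrite /TAplus /TAminus /= maxset_downset // minset_antichain. Qed.

Theorem theorem6p2' (f : ideal P -> R) :
  zero_mesic f <->
  exists c : {set P} -> R,
    forall I : ideal P, f I = \sum_(A : {set P} | antichain A) c A * TA R A I.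
Proof.
split.
  move=> /mesic_coboundary [g Hg]; have [c Hc] := span_TAminus g.
  exists c => I; rewrite Hg !Hc -sumrB; apply: eq_bigr => A _.
  by rewrite /TA TAplus_rho mulrBr.
case=> c Hc; apply: (@coboundary_mesic _ _ _ (fun I => \sum_(A : {set P} | antichain A) c A * TAminus R A I)).
move=> I; rewrite Hc -sumrB; apply: eq_bigr => A _.
by rewrite /TA TAplus_rho mulrBr.
Qed.
End C.
End Aux.

Local Open Scope ring_scope.

Theorem theorem6p2 (d : Order.disp_t) (P : finPOrderType d) (R : realType)
    (f : ideal P -> R) :
  zero_mesic f <->
  exists c : {set P} -> R,
    forall I : ideal P, f I = \sum_(A : {set P} | antichain A) c A * TA R A I.
Proof. exact: Aux.theorem6p2'. Qed.
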